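(* Let $k\geq 2$ and $n\geq k+1$ be integers. Then in $\mathcal{H}$, $$ \sum_{\substack{r, s_i\geq 1,\ s_1\geq 2\\ r+s_1+\cdots +s_{k-1}=n}} z_{r}\,\tilde{\sqcup}\, z_{s_1,\dots, s_{k-1}} = \sum_{\substack{t_i\geq 1\\ t_1+\cdots+t_{k}=n }} \big[ C(t_1,\dots, t_{k-1})- C(t_2,\dots, t_{k-1})\big] z_{t_1,\dots, t_{k}} - \sum_{ \substack{ t_i\geq 1,\ t_2=1 \\ t_1+\cdots+t_{k}=n }} z_{t_1,\dots, t_{k}}, $$ with the convention $C(t_2,\dots,t_{k-1})=C(\emptyset)=1$ when $k=2$.
   Context: Let $\mathcal{H}$ be the free $\mathbb{Z}$-module on words in letters $z_s$ ($s\geq1$), with $z_{s_1,\dots,s_k}:=z_{s_1}\cdots z_{s_k}$ and $1$ the empty word. Let $\mathbb{Z}\langle x_0,x_1\rangle$ be the free $\mathbb{Z}$-module on words in two letters $x_0,x_1$, with the shuffle product $\sqcup$ defined bilinearly and recursively by $1\sqcup u=u\sqcup 1=u$ and $(au)\sqcup(bv)=a(u\sqcup (bv))+b((au)\sqcup v)$ for letters $a,b\in\{x_0,x_1\}$ and words $u,v$. Let $\rho$ be the $\mathbb{Z}$-linear bijection from $\mathbb{Z}\oplus \mathbb{Z}\langle x_0,x_1\rangle x_1$ (span of $1$ and words ending in $x_1$) onto $\mathcal{H}$ given by $\rho(1)=1$ and $\rho(x_0^{s_1-1}x_1\cdots x_0^{s_k-1}x_1)=z_{s_1,\dots,s_k}$.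 Define the product $\tilde{\sqcup}$ on $\mathcal{H}$ by $w_1\,\tilde{\sqcup}\,w_2=\rho\big(\rho^{-1}(w_1)\sqcup\rho^{-1}(w_2)\big)$. For $m\geq 1$ and positive integers $t_1,\dots,t_{m}$ with $T_j=t_1+\cdots+t_j$, set $C(t_1,\dots,t_{m})=\sum_{j=1}^{m}2^{T_j-j}+2^{T_{m}-m}$; also $C(\emptyset)=1$. In particular $C(t_2,\dots,t_{k-1})$ denotes this quantity applied to the tuple $(t_2,\dots,t_{k-1})$. *)

(* Defs.v *)
From mathcomp Require Import all_boot all_order all_algebra.
Set Implicit Arguments. Unset Strict Implicit. Unset Printing Implicit Defensive.
Import GRing.Theory Num.Theory.
Local Open Scope ring_scope.

(* Words in x0, x1: x0 = false, x1 = true. *)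
Fixpoint shuffle (u : seq bool) : seq bool -> seq (seq bool) :=
  match u with
  | [::] => fun v => [:: v]
  | a :: u' => fix sh (v : seq bool) :=
      match v with
      | [::] => [:: u]
      | b :: v' => map (cons a) (shuffle u' v) ++ map (cons b) (sh v')
      end
  end.

(* rho^{-1}: z_{s1..sk} |-> x0^{s1-1} x1 ... x0^{sk-1} x1 *)
Definition rhoinv (s : seq nat) : seq bool :=
  flatten [seq rcons (nseq i.-1 false) true | i <- s].

(* rho on words ending in x1 (and the empty word): counts block lengths *)
Fixpoint rho_aux (c : nat) (w : seq bool) : seq nat :=
  match w with
  | [::] => [::]
  | false :: w' => rho_aux c.+1 w'
  | true :: w' => c.+1 :: rho_aux 0 w'
  end.
Definition rho (w : seq bool) : seq nat := rho_aux 0 w.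

(* Elements of H: finite formal Z-linear combinations of words z_s,
   given as lists of (coefficient, word). *)
Definition hsum := seq (int * seq nat).
Definition hcoef (x : hsum) (w : seq nat) : int :=
  \sum_(p <- x) (if p.2 == w then p.1 else 0).
Definition heq (x y : hsum) : Prop := forall w, hcoef x w = hcoef y w.
Definition zw (t : seq nat) : hsum := [:: (1, t)].
Definition hscale (c : int) (x : hsum) : hsum := [seq (c * p.1, p.2) | p <- x].
Definition hopp (x : hsum) : hsum := hscale (-1) x.
Definition hadd (x y : hsum) : hsum := x ++ y.
Definition hbig (A : Type) (I : seq A) (f : A -> hsum) : hsum := flatten (map f I).

(* the product  w1 ~⧢ w2 = rho (rho^{-1} w1 ⧢ rho^{-1} w2), bilinearly *)
Definition hsh (x y : hsum) : hsum :=
  flatten [seq [seq (p.1 * q.1, rho w) | w <- shuffle (rhoinv p.2) (rhoinv q.2)]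
          | p <- x, q <- y].

Fixpoint comps (k n : nat) : seq (seq nat) :=
  match k with
  | 0 => if n == 0%N then [:: [::]] else [::]
  | k'.+1 => flatten [seq [seq i :: c | c <- comps k' (n - i)] | i <- iota 1 n]
  end.

Definition Cf (t : seq nat) : int :=
  if t is [::] then 1 else
  ((\sum_(1 <= j < (size t).+1) 2 ^ (sumn (take j t) - j)
     + 2 ^ (sumn t - size t))%N)%:Z.

(* Main.v *)
Require Import Defs.
From mathcomp Require Import all_boot all_order all_algebra.
From mathcomp Require Import zify.
Set Implicit Arguments. Unset Strict Implicit. Unset Printing Implicit Defensive.
Import GRing.Theory.

Lemma rhoinv_cons r s : rhoinv (r :: s) = nseq r.-1 false ++ true :: rhoinv s.
Proof. by rewrite /rhoinv /= -cats1 -catA. Qed.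

Lemma rho_aux_nseq c j w : rho_aux c (nseq j false ++ w) = rho_aux (c + j) w.
Proof. by elim: j c => [|j IH] c /=; rewrite ?addn0 // IH addnS. Qed.

Lemma rho_rhoinv s : all (fun i => 0 < i) s -> rho (rhoinv s) = s.
Proof.
elim: s => [|r s IH] //= /andP[hr hs]; rewrite /rho in IH.
by rewrite rhoinv_cons /rho rho_aux_nseq add0n /= prednK // IH.
Qed.

Lemma rhoinv_rho_aux w c : last (c == 0) w -> rhoinv (rho_aux c w) = nseq c false ++ w.
Proof.
elim: w c => [|[] w IH] c /=.
- by case: c.
- move=> h; rewrite rhoinv_cons /= IH //.
- move=> h; rewrite IH //= -cat1s catA -[[:: false]]/(nseq 1 false) -nseqD addnC nseqD -catA //.
Qed.

Lemma rhoinv_rho w : last true w -> rhoinv (rho w) = w.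
Proof. by move=> h; rewrite /rho rhoinv_rho_aux. Qed.

Lemma size_rho_aux c w : size (rho_aux c w) = count id w.
Proof. by elim: w c => [|[] w IH] c //=; rewrite IH. Qed.

Lemma sumn_rho_aux c w : last (c == 0) w -> sumn (rho_aux c w) = c + size w.
Proof.
elim: w c => [|[] w IH] c /=; first by case: c.
- by move=> h; rewrite IH // add0n addSn addnS.
- by move=> h; rewrite IH // addnS addSn.
Qed.

Lemma all_rho_aux c w : all (fun i => 0 < i) (rho_aux c w).
Proof. by elim: w c => [|[] w IH] c //=. Qed.

Lemma count_rhoinv s : count id (rhoinv s) = size s.
Proof.
elim: s => [|r s IH] //=; rewrite rhoinv_cons count_cat /= IH.
by rewrite (count_nseq) /= mul0n.
Qed.

Lemma size_rhoinv s : all (fun i => 0 < i) s -> size (rhoinv s) = sumn s.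
Proof.
elim: s => [|r s IH] //= /andP[hr hs]; rewrite rhoinv_cons size_cat size_nseq /= IH //.
lia.
Qed.

Lemma last_rhoinv b s : s != [::] -> last b (rhoinv s) = true.
Proof.
elim: s b => [|r s IH] b //= _; rewrite rhoinv_cons last_cat /=.
by case: s IH => [|r' s'] IH //=; rewrite IH.
Qed.

Lemma last_rhoinvT s : last true (rhoinv s) = true.
Proof. by case: s => [|r s] //; rewrite last_rhoinv. Qed.

Lemma mem_comps k n t :
  (t \in comps k n) = [&& size t == k, all (fun i => 0 < i) t & sumn t == n].
Proof.
elim: k n t => [|k IH] n t /=.
- by case: t => [|a t] /=; case: n => [|n] //=; rewrite ?andbF.
- apply/flatten_mapP/idP.
  + move=> [i]; rewrite mem_iota => /andP[h1 h2] /mapP [c]; rewrite IH.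
    move=> /and3P[/eqP hs ha /eqP hsum] ->/=; rewrite hs ha eqxx /=; apply/eqP; lia.
  + case: t => [|a t] //= /and3P[hs /andP[ha hall] /eqP hsum].
    exists a; first by rewrite mem_iota; lia.
    apply/mapP; exists t => //; rewrite IH hall /=; apply/andP; split; first by [].
    apply/eqP; lia.
Qed.

Lemma uniq_comps k n : uniq (comps k n).
Proof.
elim: k n => [|k IH] n /=; first by case: (n == 0).
have: uniq (iota 1 n) by apply: iota_uniq.
elim: (iota 1 n) => [|i s IHs] //= /andP[his us].
rewrite cat_uniq IHs // andbT (map_inj_uniq (fun x y => @congr1 _ _ behead (i :: x) (i :: y))) IH /=.
apply/hasPn => x /flatten_mapP [j js] /mapP [c _ ->]; apply/mapP => -[d _ [e]].
by move: his; rewrite -e js.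
Qed.

Lemma shuffle_nil_l v : shuffle [::] v = [:: v].
Proof. by []. Qed.
Lemma shuffle_nil_r u : shuffle u [::] = [:: u].
Proof. by case: u. Qed.
Lemma shuffle_cons a u b v : shuffle (a::u) (b::v) =
  map (cons a) (shuffle u (b::v)) ++ map (cons b) (shuffle (a::u) v).
Proof. by []. Qed.

Lemma shuffle_perm u v x : x \in shuffle u v -> perm_eq x (u ++ v).
Proof.
elim: u v x => [|a u IHu] v x; first by rewrite shuffle_nil_l inE => /eqP->.
elim: v x => [|b v IHv] x; first by rewrite shuffle_nil_r inE cats0 => /eqP->.
rewrite shuffle_cons mem_cat => /orP[] /mapP [y hy ->].
- by rewrite /= perm_cons IHu.
- have := perm_catCA (a :: u) [:: b] v => /= h.
  by rewrite perm_sym h /= perm_cons perm_sym IHv.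
Qed.

Lemma last_true (a : bool) (s : seq bool) : last a s -> last true s.
Proof. by case: s. Qed.

Lemma last_shuffle u v x : x \in shuffle u v -> last true u -> last true v -> last true x.
Proof.
elim: u v x => [|a u IHu] v x; first by rewrite shuffle_nil_l inE => /eqP->.
elim: v x => [|b v IHv] x; first by rewrite shuffle_nil_r inE => /eqP->.
rewrite shuffle_cons mem_cat => /orP[] /mapP [y hy ->] /= hu hv.
- have := shuffle_perm hy => /perm_size; case: y hy => [|c y] hy //=.
  by rewrite size_cat /= addnS.
  move=> _; have := IHu _ _ hy (last_true hu) hv. by [].
- have := shuffle_perm hy => /perm_size; case: y hy => [|c y] hy //=.
  move=> _; have := IHv _ hy hu (last_true hv). by [].
Qed.

Fixpoint masks (n : nat) : seq (seq bool) :=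
  if n is n'.+1 then map (cons true) (masks n') ++ map (cons false) (masks n')
  else [:: [::]].

Lemma size_masks n m : m \in masks n -> size m = n.
Proof.
elim: n m => [|n IH] m /=; first by rewrite inE => /eqP->.
by rewrite mem_cat => /orP[] /mapP [m' hm ->] /=; rewrite IH.
Qed.

Lemma count_andb T (b : bool) (P : pred T) s :
  count (fun x => b && P x) s = b * count P s.
Proof. by case: b; rewrite ?mul1n ?mul0n //; elim: s. Qed.

Lemma count_shuffle_cons c w u v :
  count_mem (c :: w) (shuffle u v) =
  (if u is a :: u' then (a == c) * count_mem w (shuffle u' v) else 0) +
  (if v is b :: v' then (b == c) * count_mem w (shuffle u v') else 0).
Proof.
case: u => [|a u]; case: v => [|b v].
- by [].
- by rewrite shuffle_nil_l /= eqseq_cons; case: (b == c); case: (v == w).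
- by rewrite !shuffle_nil_r /= eqseq_cons; case: (a == c); case: (u == w); rewrite ?addn0.
- rewrite shuffle_cons count_cat !count_map; congr (_ + _).
  + rewrite -(count_andb (a == c) (pred1 w)); apply: eq_count => x /=.
    by rewrite eqseq_cons eq_sym.
  + rewrite -(count_andb (b == c) (pred1 w)); apply: eq_count => x /=.
    by rewrite eqseq_cons eq_sym.
Qed.

Lemma count_cons_nil (a : bool) s : count (preim (cons a) (pred1 [::])) s = 0.
Proof. by elim: s. Qed.

Lemma count_shuffle_masks w u v :
  count_mem w (shuffle u v) =
  count (fun m => (mask m w == u) && (mask (map negb m) w == v)) (masks (size w)).
Proof.
elim: w u v => [|c w IH] u v.
- rewrite /= addn0; case: u => [|a u]; case: v => [|b v] //.
  rewrite shuffle_cons count_cat !count_map /=.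
    by rewrite !count_cons_nil.
- rewrite count_shuffle_cons /= count_cat !count_map; congr (_ + _).
  + case: u => [|a u].
      by apply/esym/eqP; rewrite -leqn0 leqNgt -has_count; apply/hasPn => m _ /=.
    rewrite IH -count_andb; apply: eq_count => m /=; by rewrite eqseq_cons eq_sym andbA.
  + case: v => [|b v].
      by apply/esym/eqP; rewrite -leqn0 leqNgt -has_count; apply/hasPn => m _ /=; rewrite andbF.
    rewrite IH -count_andb; apply: eq_count => m /=; rewrite eqseq_cons eq_sym.
    by case: (_ == u); case: (c == b).
Qed.

Definition stepA (s : nat) (c : bool) : nat := if s == 0 then (if c then 1 else 0) else 2.
Definition stepB (s : nat) (c : bool) : nat :=
  match s with 0 => if c then 3 else 1 | 1 | 2 => if c then 2 else 1 | _ => 3 end.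
Definition accA s x := foldl stepA s x == 1.
Definition accB s x := foldl stepB s x == 2.
Definition F su sv w :=
  count (fun m => accA su (mask m w) && accB sv (mask (map negb m) w)) (masks (size w)).

Lemma F_nil su sv : F su sv [::] = (su == 1) && (sv == 2).
Proof. by rewrite /F /= /accA /accB /= addn0. Qed.

Lemma F_cons su sv c w : F su sv (c :: w) = F (stepA su c) sv w + F su (stepB sv c) w.
Proof. by rewrite /F /= count_cat !count_map. Qed.

Lemma F_deadA sv w : F 2 sv w = 0.
Proof. by elim: w sv => [|c w IH] sv; rewrite ?F_nil ?F_cons ?IH. Qed.

Lemma foldlB3 x : foldl stepB 3 x = 3.
Proof. by elim: x. Qed.

Lemma F_deadB su w : F su 3 w = 0.
Proof.
rewrite /F; apply/eqP; rewrite -leqn0 leqNgt -has_count; apply/hasPn => m _ /=.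
by rewrite /accB foldlB3 andbF.
Qed.

Lemma F_one sv w : F 1 sv w = accB sv w.
Proof.
elim: w sv => [|c w IH] sv; first by rewrite F_nil.
by rewrite F_cons IH F_deadA.
Qed.

Lemma accB12 (b : bool) x : accB (if b then 2 else 1) x = last b x.
Proof.
elim: x b => [|c x IH] b; first by case: b.
rewrite /accB /= -/(accB _ x) -IH; congr accB; by case: b.
Qed.

Lemma accB0 x : accB 0 x = if x is false :: x' then last false x' else false.
Proof.
case: x => [|[] x] //; first by rewrite /accB /= foldlB3.
by rewrite /accB /= -/(accB 1 x) -(accB12 false).
Qed.

Lemma F0_false s w : s <= 2 -> F 0 s (false :: w) = F 0 s w + F 0 1 w.
Proof. by rewrite F_cons; case: s => [|[|[|s]]]. Qed.

Lemma F_nseq1 j x : F 0 1 (nseq j false ++ x) = 2 ^ j * F 0 1 x.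
Proof.
elim: j => [|j IH]; first by rewrite mul1n.
by rewrite /= F0_false // IH expnS; lia.
Qed.

Lemma F_nseq s j x : s <= 2 ->
  F 0 s (nseq j false ++ x) + F 0 1 x = F 0 s x + 2 ^ j * F 0 1 x.
Proof.
move=> hs; elim: j => [|j IH]; first by rewrite mul1n.
rewrite /= F0_false // F_nseq1 expnS; lia.
Qed.

Lemma F0_true0 w : F 0 0 (true :: w) = accB 0 w.
Proof. by rewrite F_cons F_one F_deadB addn0. Qed.

Lemma F0_true1 w : F 0 1 (true :: w) = accB 1 w + F 0 2 w.
Proof. by rewrite F_cons F_one. Qed.

Lemma F0_true2 w : F 0 2 (true :: w) = accB 2 w + F 0 2 w.
Proof. by rewrite F_cons F_one. Qed.

Definition o t := F 0 2 (rhoinv t).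

Lemma accB_rhoinv1 t : accB 1 (rhoinv t) = (t != [::]).
Proof. by have /= -> := accB12 false (rhoinv t); case: t => [|r t] //; rewrite last_rhoinv. Qed.

Lemma accB_rhoinv2 t : accB 2 (rhoinv t).
Proof. by have /= -> := accB12 true (rhoinv t); rewrite last_rhoinvT. Qed.

Lemma accB0_rhoinv r t : 0 < r -> accB 0 (rhoinv (r :: t)) = (2 <= r).
Proof.
rewrite accB0 rhoinv_cons; case: r => [|[|r]] //= _.
by rewrite last_cat /= last_rhoinvT.
Qed.

Lemma o_cons r t : 0 < r ->
  o (r :: t) + ((t != [::]) + o t) = 1 + o t + 2 ^ r.-1 * ((t != [::]) + o t).
Proof.
move=> hr; rewrite /o rhoinv_cons.
have := F_nseq r.-1 (true :: rhoinv t) (isT : 2 <= 2).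
by rewrite F0_true2 F0_true1 accB_rhoinv1 accB_rhoinv2.
Qed.

Lemma main_F r r' t : 0 < r -> 0 < r' ->
  F 0 0 (rhoinv (r :: r' :: t)) + (1 + o (r' :: t)) =
  (2 <= r') + 2 ^ r.-1 * (1 + o (r' :: t)).
Proof.
move=> hr hr'; rewrite rhoinv_cons.
have := F_nseq r.-1 (true :: rhoinv (r' :: t)) (isT : 0 <= 2).
by rewrite F0_true0 F0_true1 accB_rhoinv1 accB0_rhoinv.
Qed.

Definition Cn (t : seq nat) : nat :=
  if t is [::] then 1 else
  (\sum_(1 <= j < (size t).+1) 2 ^ (sumn (take j t) - j) + 2 ^ (sumn t - size t))%N.

Lemma Cf_Cn t : Cf t = Posz (Cn t).
Proof. by case: t. Qed.

Lemma sumn_take_ge s j : all (fun i => 0 < i) s -> j <= size s -> j <= sumn (take j s).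
Proof.
elim: s j => [|a s IH] [|j] //= /andP[ha hs] hj.
have := IH j hs hj; lia.
Qed.

Lemma Cn_cons r s : 0 < r -> all (fun i => 0 < i) s -> Cn (r :: s) = 2 ^ r.-1 * (1 + Cn s).
Proof.
move=> hr hs; rewrite /Cn [size _]/= big_ltn // big_add1 /=.
have e1 : 2 ^ (r + 0 - 1) = 2 ^ r.-1 by congr (_ ^ _); lia.
rewrite take0 e1.
have e2 : \sum_(1 <= i < (size s).+1) 2 ^ (sumn (take i.+1 (r :: s)) - i.+1)
        = 2 ^ r.-1 * \sum_(1 <= i < (size s).+1) 2 ^ (sumn (take i s) - i).
  rewrite big_distrr /=; apply: eq_big_nat => i /andP[h1 h2].
  rewrite /= -expnD; congr (_ ^ _).
  have := sumn_take_ge hs (_ : i <= size s); lia.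
rewrite e2.
have e3 : 2 ^ (r + sumn s - (size s).+1) = 2 ^ r.-1 * 2 ^ (sumn s - size s).
  rewrite -expnD; congr (_ ^ _).
  have := sumn_take_ge hs (leqnn (size s)); rewrite take_size; lia.
rewrite e3; case: s hs e2 e3 => [|a s] hs e2 e3.
- rewrite big_geq //= subn0 expn0; move: (2 ^ r.-1) => x; lia.
- move: (2 ^ r.-1) (\sum_(_ <= _ < _) _) (2 ^ _) => x y z; lia.
Qed.

Lemma all_take_pos j s : all (fun i => 0 < i) s -> all (fun i => 0 < i) (take j s).
Proof. by elim: s j => [|a s IH] [|j] //= /andP[-> /IH ->]. Qed.

Lemma o_Cn t : t != [::] -> all (fun i => 0 < i) t -> o t = Cn (take (size t).-1 t).
Proof.
elim: t => [|r t IH] //= _ /andP[hr hs].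
case: t IH hs => [|r' t] IH hs.
- have := o_cons [::] hr; rewrite /o /= F_nil /=. lia.
- have := o_cons (r' :: t) hr; rewrite IH //.
  have -> : take (size [:: r, r' & t]).-1 [:: r, r' & t] = r :: take (size t) (r' :: t) by [].
  rewrite Cn_cons //; last exact: all_take_pos.
  move: (Cn _) (2 ^ _) => c x /=; lia.
Qed.

Lemma foldlA2 x : foldl stepA 2 x = 2.
Proof. by elim: x. Qed.

Lemma accA0 U : accA 0 U = (U == rcons (nseq (size U).-1 false) true).
Proof.
elim: U => [|[] U IH] //.
- case: U {IH} => [|c U] //.
  by rewrite /accA /= foldlA2.
- rewrite /accA /= -/(accA 0 U) IH; case: U {IH} => [|c U] //=.
Qed.

Lemma rhoinv1 r : rhoinv [:: r] = rcons (nseq r.-1 false) true.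
Proof. by rewrite /rhoinv /= cats0. Qed.

Lemma count_mask_split (p : pred bool) m x : size m = size x ->
  count p (mask m x) + count p (mask (map negb m) x) = count p x.
Proof.
elim: x m => [|c x IH] [|b m] //= [] /IH <-; case: b => /=; lia.
Qed.

Lemma size_mask_split m (x : seq bool) : size m = size x ->
  size (mask m x) + size (mask (map negb m) x) = size x.
Proof. by move=> h; rewrite -!count_predT count_mask_split. Qed.

Lemma sum_bool_count T (P : pred T) s : \sum_(x <- s) (P x : nat) = count P s.
Proof. by elim: s => [|a s IH]; rewrite ?big_nil ?big_cons ?IH. Qed.

Lemma head_rho_aux c x : last false x -> c < nth 0 (rho_aux c x) 0.
Proof.
elim: x c => [|[] x IH] c //= h.
by have := IH c.+1 h; lia.
Qed.

Section LemC.
Variables (k n : nat) (w : seq nat).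
Hypothesis hk : 2 <= k.
Hypothesis hw : w \in comps k n.

Lemma lemC m : size m = size (rhoinv w) ->
  \sum_(s <- [seq t <- comps k n | 2 <= nth 0 t 1])
     ((rhoinv [:: head 0 s] == mask m (rhoinv w)) &&
      (rhoinv (behead s) == mask (map negb m) (rhoinv w)) : nat)
  = accA 0 (mask m (rhoinv w)) && accB 0 (mask (map negb m) (rhoinv w)).
Proof.
move=> hm; rewrite sum_bool_count.
set U := mask m (rhoinv w); set V := mask (map negb m) (rhoinv w).
move: hw; rewrite mem_comps => /and3P[/eqP hsw hpw /eqP hsumw].
have hcnt := count_mask_split id hm; have hsz := size_mask_split hm.
rewrite count_rhoinv size_rhoinv // hsw hsumw -/U -/V in hcnt hsz.
case hAB: (accA 0 U && accB 0 V).
- move: hAB => /andP[]; rewrite accA0 accB0 => /eqP hU hB.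
  have [V' hV hV'] : exists2 V', V = false :: V' & last false V'.
    by move: hB; case: (V) => [|[] V'] // h; exists V'.
  have hVl : last true V by rewrite hV.
  have hUs : 0 < size U by rewrite hU size_rcons.
  set s0 := size U :: rho V.
  have e : {in [seq t <- comps k n | 2 <= nth 0 t 1],
      (fun s => (rhoinv [:: head 0 s] == U) && (rhoinv (behead s) == V)) =1 pred1 s0}.
    move=> s; rewrite mem_filter mem_comps => /andP[_ /and3P[/eqP hs hps _]].
    case: s hs hps => [|a s'] /= hs; first by move: hk; rewrite -hs.
    move=> /andP[ha hps].
    change (((rhoinv [:: a] == U) && (rhoinv s' == V)) = (a :: s' == s0)).
    apply/andP/eqP.
    + move=> [/eqP h1 /eqP h2]; rewrite /s0 -h2 rho_rhoinv // -h1 rhoinv1 size_rcons size_nseq.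
      by rewrite prednK.
    + move=> [-> ->]; rewrite rhoinv_rho //; split => //.
      by rewrite rhoinv1 -hU.
  rewrite (eq_in_count e) count_uniq_mem ?filter_uniq ?uniq_comps //.
  rewrite mem_filter mem_comps /s0 /= hUs all_rho_aux /=.
  have hcU : count id U = 1 by rewrite hU -cats1 count_cat count_nseq /= mul0n.
  suff -> : [&& 1 < nth 0 (rho V) 0, (size (rho V)).+1 == k & size U + sumn (rho V) == n] by [].
  apply/and3P; split.
  + by rewrite hV /rho /=; apply: head_rho_aux.
  + by rewrite /rho size_rho_aux -hcnt hcU.
  + by rewrite /rho sumn_rho_aux // hsz.
- apply/eqP; rewrite -leqn0 leqNgt -has_count; apply/hasP => -[s].
  rewrite mem_filter mem_comps => /andP[h2 /and3P[/eqP hs hps _]] /andP[/eqP h1 /eqP h3].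
  move: hAB; rewrite -h1 -h3 accA0 rhoinv1 size_rcons size_nseq /=.
  case: s hs hps h2 {h1 h3} => [|a [|b s']] //= hs /and3P[ha hb hps] h2.
  by rewrite eqxx /= accB0_rhoinv // h2.
Qed.
End LemC.

Lemma hcoef_cat x y w : hcoef (x ++ y) w = (hcoef x w + hcoef y w)%R.
Proof. by rewrite /hcoef big_cat. Qed.

Lemma hcoef_hbig A (I : seq A) f w : hcoef (hbig I f) w = (\sum_(i <- I) hcoef (f i) w)%R.
Proof.
elim: I => [|i I IH]; first by rewrite /hcoef !big_nil.
by rewrite big_cons -IH /hbig /= hcoef_cat.
Qed.

Lemma hcoef_hscale_zw c t w : hcoef (hscale c (zw t)) w = if t == w then c else 0%R.
Proof. by rewrite /hcoef /= big_cons big_nil /= mulr1 addr0. Qed.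

Lemma hcoef_zw t w : hcoef (zw t) w = if t == w then 1%R else 0%R.
Proof. by rewrite /hcoef /= big_cons big_nil /= addr0. Qed.

Lemma hcoef_hopp x w : hcoef (hopp x) w = (- hcoef x w)%R.
Proof.
rewrite /hcoef /hopp /hscale big_map -sumrN; apply: eq_bigr => p _ /=.
by case: (_ == w); rewrite ?mulN1r ?oppr0.
Qed.

Lemma hcoef_hsh a b w : hcoef (hsh (zw a) (zw b)) w =
  Posz (count (fun x => rho x == w) (shuffle (rhoinv a) (rhoinv b))).
Proof.
rewrite /hsh /zw /= cats0 /hcoef big_map.
elim: (shuffle _ _) => [|x L IH]; first by rewrite big_nil.
by rewrite big_cons IH /=; case: (rho x == w); rewrite ?add0r // PoszD.
Qed.

Lemma sum_if_uniq (L : seq (seq nat)) (c : seq nat -> int) w : uniq L ->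
  (\sum_(t <- L) (if t == w then c t else 0%R))%R = if w \in L then c w else 0%R.
Proof.
elim: L => [|t L IH]; first by rewrite big_nil.
rewrite big_cons inE /= => /andP[htL hu]; rewrite IH //.
case: (eqVneq t w) => [<-|ne]; first by rewrite (negbTE htL) addr0.
by rewrite add0r.
Qed.

Lemma sumPosz A (I : seq A) (f : A -> nat) :
  (\sum_(i <- I) Posz (f i))%R = Posz (\sum_(i <- I) f i).
Proof.
elim: I => [|i I IH]; first by rewrite !big_nil.
by rewrite !big_cons IH PoszD.
Qed.

Lemma shuffle_comps k n s x : s \in comps k n -> 0 < k ->
  x \in shuffle (rhoinv [:: head 0 s]) (rhoinv (behead s)) ->
  last true x /\ rho x \in comps k n.
Proof.
rewrite mem_comps => /and3P[/eqP hs hp /eqP hsum] hk hx.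
have hl : last true x by apply: (last_shuffle hx); rewrite last_rhoinvT.
split => //.
have hperm := shuffle_perm hx.
case: s hs hp hsum hx hperm => [|a s'] /= hs; first by move: hk; rewrite -hs.
move=> /andP[ha hp'] hsum hx hperm.
rewrite mem_comps /rho all_rho_aux size_rho_aux sumn_rho_aux // ((permP hperm) id)
  (perm_size hperm) count_cat size_cat !count_rhoinv !size_rhoinv /= ?ha //.
by rewrite add1n hs addn0 hsum !eqxx.
Qed.
Unset Implicit Arguments.
Local Open Scope ring_scope.

Theorem theorem2p6 (k n : nat) (hk : (2 <= k)%N) (hn : (k.+1 <= n)%N) :
  heq
    (hbig [seq t <- comps k n | (2 <= nth 0 t 1)%N]
          (fun t => hsh (zw [:: head 0%N t]) (zw (behead t))))
    (hadd
      (hbig (comps k n)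
         (fun t => hscale (Cf (take k.-1 t) - Cf (take (k - 2) (behead t))) (zw t)))
      (hopp (hbig [seq t <- comps k n | nth 0 t 1 == 1%N] zw))).
Proof.
move=> w; rewrite /hadd hcoef_cat hcoef_hopp !hcoef_hbig.
under eq_bigr do rewrite hcoef_hsh.
under [X in _ = X + _]eq_bigr do rewrite hcoef_hscale_zw.
under [X in _ = _ - X]eq_bigr do rewrite hcoef_zw.
rewrite !sum_if_uniq ?filter_uniq ?uniq_comps //.
have hk0 : (0 < k)%N by lia.
case hw: (w \in comps k n); last first.
- rewrite mem_filter hw andbF subr0 big_seq big1 // => s.
  rewrite mem_filter => /andP[_ hs]; apply/eqP; rewrite eqz_nat -leqn0 leqNgt -has_count.
  apply/hasPn => x hx /=; have [_ hr] := shuffle_comps hs hk0 hx.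
  by apply/negP => /eqP e; move: hr; rewrite e hw.
- move: (hw); rewrite mem_comps => /and3P[/eqP hsw hpw /eqP hsumw].
  set S := [seq t <- comps k n | (1 < nth 0 t 1)%N].
  have e1 : forall s, s \in S -> count (fun x => rho x == w)
      (shuffle (rhoinv [:: head 0%N s]) (rhoinv (behead s))) =
      \sum_(m <- masks (size (rhoinv w)))
        ((rhoinv [:: head 0%N s] == mask m (rhoinv w)) &&
         (rhoinv (behead s) == mask (map negb m) (rhoinv w)) : nat).
    move=> s; rewrite mem_filter => /andP[_ hs].
    rewrite sum_bool_count.
    have -> : count (fun m => (rhoinv [:: head 0%N s] == mask m (rhoinv w)) &&
         (rhoinv (behead s) == mask (map negb m) (rhoinv w))) (masks (size (rhoinv w)))
       = count_mem (rhoinv w) (shuffle (rhoinv [:: head 0%N s]) (rhoinv (behead s))).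
      by rewrite count_shuffle_masks; apply: eq_count => m; rewrite /= eq_sym [X in _ && X]eq_sym.
    apply: eq_in_count => x hx.
    have [hl _] := shuffle_comps hs hk0 hx.
    by apply/eqP/eqP => [<-|->]; [rewrite rhoinv_rho | rewrite rho_rhoinv].
  rewrite sumPosz big_seq (eq_bigr _ e1) -big_seq exchange_big /=.
  rewrite big_seq (eq_bigr _ (fun m hm => lemC hk hw (size_masks hm))) -big_seq.
  rewrite sum_bool_count -/(F 0 0 (rhoinv w)).
  rewrite mem_filter hw andbT.
  case: w hw hsw hpw hsumw e1 => [|r [|r' t]] //= hw hsw; try by move: hk; rewrite -hsw.
  move=> /and3P[hr hr' hpt] hsumw _.
  have hm := main_F t hr hr'.
  rewrite o_Cn //= ?hr' // in hm.
  have e : take (size [:: r, r' & t]).-1 [:: r, r' & t] = r :: take (size t) (r' :: t) by [].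
  have e2 : take (size [:: r, r' & t] - 2) (behead [:: r, r' & t]) = take (size t) (r' :: t).
    by rewrite /= subn2.
  rewrite -hsw e e2 !Cf_Cn Cn_cons //; last by apply: all_take_pos; rewrite /= hr'.
  move: hm; rewrite /=.
  move: (F 0 0 _) (Cn _) (2 ^ r.-1)%N => f c x.
  move: (x * (1 + c))%N => y.
  case: r' hr' {hw hsw hsumw e e2 hpt} => [|[|r'']] //= _ h; lia.
Qed.
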